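(* For $x\in(0,1/4]$ and integer $n\ge1$, let $S_n(x)=\sum_{k=0}^{n-1}\frac{(1-x)^k}{n-k}$. Then $$x\,S_n(x)\le\frac{7\ln(1/x)}{n}.$$ *)

(* Defs.v *)
From Stdlib Require Import Reals Lra Lia.
Open Scope R_scope.

Fixpoint sum_upto (f : nat -> R) (m : nat) : R :=
  match m with
  | O => 0
  | S m' => sum_upto f m' + f m'
  end.

Definition S_n (n : nat) (x : R) : R :=
  sum_upto (fun k => (1 - x) ^ k / INR (n - k)) n.

(* Main.v *)
Require Import Defs.
From Stdlib Require Import Reals Lra Lia.
Open Scope R_scope.

Lemma sum_upto_shift (f : nat -> R) (m : nat) :
  sum_upto f (S m) = f 0%nat + sum_upto (fun k => f (S k)) m.
Proof. induction m; simpl in *; [lra|]. rewrite IHm. lra. Qed.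

Lemma sum_upto_scal (f : nat -> R) c m :
  sum_upto (fun k => c * f k) m = c * sum_upto f m.
Proof. induction m; simpl; [lra|]. rewrite IHm. lra. Qed.



Lemma sum_upto_ext (f g : nat -> R) m : (forall k, f k = g k) -> sum_upto f m = sum_upto g m.
Proof. intro H; induction m; simpl; [lra|]. rewrite IHm, H. lra. Qed.

Lemma S_rec (n : nat) x : S_n (S n) x = / INR (S n) + (1 - x) * S_n n x.
Proof.
  unfold S_n. rewrite sum_upto_shift. simpl pow. rewrite Nat.sub_0_r.
  rewrite <- sum_upto_scal. f_equal; [unfold Rdiv; lra|].
  apply sum_upto_ext; intro k. simpl. unfold Rdiv; lra.
Qed.

Lemma S_nonneg n x : 0 < x <= 1/4 -> 0 <= S_n n x.
Proof.
  intro H; induction n. unfold S_n; simpl; lra.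
  rewrite S_rec. assert (0 < / INR (S n)) by (apply Rinv_0_lt_compat, lt_0_INR; lia).
  nra.
Qed.

Lemma ln_le_m1 y : 0 < y -> ln y <= y - 1.
Proof. intro H. pose proof (exp_ineq1_le (ln y)). rewrite exp_ln in H0; lra. Qed.

Lemma ln_le_mono a b : 0 < a -> a <= b -> ln a <= ln b.
Proof. intros H1 H2. destruct (Req_dec a b); [subst; lra|].
  left; apply ln_increasing; lra. Qed.

Lemma S_le_log n x : 0 < x <= 1/4 -> (1 <= n)%nat -> S_n n x <= 1 + ln (INR n).
Proof.
  intros H Hn. induction n. lia.
  destruct n. unfold S_n; simpl. rewrite ln_1. lra.
  rewrite S_rec. specialize (IHn ltac:(lia)).
  pose proof (S_nonneg (S n) x H).
  assert (Hl : / INR (S (S n)) <= ln (INR (S (S n))) - ln (INR (S n))).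
  { set (a := INR (S n)). assert (Ha : 0 < a) by (apply lt_0_INR; lia).
    replace (INR (S (S n))) with (a + 1) by (rewrite S_INR; reflexivity).
    pose proof (ln_le_m1 (a / (a+1)) ltac:(apply Rdiv_lt_0_compat; lra)).
    unfold Rdiv in H1; rewrite ln_mult in H1 by (try apply Rinv_0_lt_compat; lra).
    rewrite ln_Rinv in H1 by lra.
    replace (a * / (a + 1) - 1) with (- / (a+1)) in H1 by (field; lra). lra. }
  nra.
Qed.

Theorem lemma3 (x : R) (n : nat) (hx0 : 0 < x) (hx1 : x <= 1/4) (hn : (1 <= n)%nat) :
  x * S_n n x <= 7 * ln (1 / x) / INR n.
Proof.
  set (L := ln (1 / x)).
  assert (HL : 2 * ln 2 <= L).
  { unfold L. replace (2 * ln 2) with (ln 4).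
    apply ln_le_mono; [lra|]. apply (Rmult_le_reg_r x); [lra|].
    unfold Rdiv; rewrite Rmult_assoc, Rinv_l by lra. lra.
    replace 4 with (2 * 2) by lra. rewrite ln_mult; lra. }
  pose proof ln_lt_2.
  induction n as [|m IH]. lia.
  assert (Hn : 0 < INR (S m)) by (apply lt_0_INR; lia).
  destruct (Rlt_le_dec (INR (S m) * x) 2) as [Hs|Hs].
  -
    pose proof (S_le_log (S m) x ltac:(lra) hn).
    assert (Hln : ln (INR (S m)) <= ln 2 + L).
    { unfold L. rewrite <- ln_mult by (try apply Rdiv_lt_0_compat; lra). apply ln_le_mono; [lra|].
      apply (Rmult_le_reg_r x); [lra|]. replace (2 * (1 / x) * x) with 2 by (field; lra). lra. }
    assert (Hln0 : 0 <= ln (INR (S m))).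
    { rewrite <- ln_1. apply ln_le_mono; [lra|]. rewrite S_INR. pose proof (pos_INR m); lra. }
    apply (Rmult_le_reg_r (INR (S m))); [lra|].
    replace (7 * L / INR (S m) * INR (S m)) with (7 * L) by (field; lra).
    pose proof (S_nonneg (S m) x ltac:(lra)).
    assert (x * S_n (S m) x * INR (S m) <= x * INR (S m) * (1 + ln (INR (S m)))).
    { replace (x * S_n (S m) x * INR (S m)) with (x * INR (S m) * S_n (S m) x) by ring.
      apply Rmult_le_compat_l; [nra|lra]. }
    assert (x * INR (S m) * (1 + ln (INR (S m))) <= 2 * (1 + ln 2 + L)).
    { apply Rmult_le_compat; nra. }
    nra.
  - destruct m. simpl in Hs. lra.
    specialize (IH ltac:(lia)).
    assert (Hm : 0 < INR (S m)) by (apply lt_0_INR; lia).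
    rewrite S_rec.
    replace (x * (/ INR (S (S m)) + (1 - x) * S_n (S m) x))
      with (x / INR (S (S m)) + (1 - x) * (x * S_n (S m) x)) by (unfold Rdiv; ring).
    assert (Hq : (1 - x) * (x * S_n (S m) x) <= (1 - x) * (7 * L / INR (S m)))
      by (apply Rmult_le_compat_l; lra).
    assert (E : INR (S (S m)) = INR (S m) + 1) by (rewrite S_INR; reflexivity).
    rewrite E in Hs |- *.
    set (a := INR (S m)) in *.
    assert (x / (a + 1) + (1 - x) * (7 * L / a) <= 7 * L / (a + 1)).
    { apply (Rmult_le_reg_r (a * (a+1))); [nra|].
      field_simplify; try lra.
      assert (7 * L * ((a + 1) * x - 1) >= x * a) by nra.
      nra. }
    lra.
Qed.
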